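(* Let $(\chi_1,u_1)$ and $(\chi_2,u_2)$ be rooted realizable chirotopes. Then their join $(\chi_3,u_3)=(\chi_1,u_1)\vee(\chi_2,u_2)$ is a rooted realizable chirotope; that is, $\chi_3$ is a realizable chirotope and $u_3$ is an extreme element of $\chi_3$.
   Context: For a finite set $E$, $(E)_3$ is the set of ordered triples of distinct elements of $E$. A sign function on $E$ is a map $\chi:(E)_3\to\{-1,1\}$ with $\chi(x,y,z)=\chi(y,z,x)=\chi(z,x,y)=-\chi(z,y,x)=-\chi(y,x,z)=-\chi(x,z,y)$. A chirotope on $E$ is a sign function that moreover satisfies: (interiority) for distinct $t,x,y,z$, if $\chi(t,y,z)=\chi(x,t,z)=\chi(x,y,t)=1$ then $\chi(x,y,z)=1$; (transitivity) for distinct $s,t,x,y,z$, if $\chi(t,s,x)=\chi(t,s,y)=\chi(t,s,z)=\chi(x,y,t)=\chi(y,z,t)=1$ then $\chi(x,z,t)=1$. A chirotope is realizable if there are points $\mathfrak p_e\in\mathbb R^2$ ($e\in E$), no three collinear, such that $\chi(x,y,z)=1$ iff $\mathfrak p_x,\mathfrak p_y,\mathfrak p_z$ are in counterclockwise order. An element $x$ is extreme if there is $y\ne x$ such that $\chi(x,y,z)$ takes the same value for all $z\in E\setminus\{x,y\}$. A rooted chirotope is a pair $(\chi,u)$ with $\chi$ a chirotope on $X\cup\{u\}$ and $u\notin X$ an extreme element; it is realizable if $\chi$ is. For a rooted chirotope, $u^+$ (resp. $u^-$), the successor (resp. predecessor) of $u$ in counterclockwise order on the convex hull, is the element $y$ with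 $\chi(u,y,z)=1$ (resp. $\chi(y,u,z)=1$) for all $z\notin\{u,y\}$. Join: given rooted chirotopes $(\chi_1,u_1)$ on $X_1\cup\{u_1\}$ and $(\chi_2,u_2)$ on $X_2\cup\{u_2\}$, let $X_3$ be the disjoint union of $X_1$ and $X_2$ in which $u_1^-$ and $u_2^+$ are identified into one element $x_0$ (so $X_1,X_2\subseteq X_3$ with $X_1\cap X_2=\{x_0\}$), and let $u_3$ be a new element. The join $(\chi_3,u_3)$ has $\chi_3$ the sign function on $X_3\cup\{u_3\}$ determined (using symmetry) by: for $x,y,z\in X_3$, $\chi_3(x,y,z)=\chi_1(x,y,z)$ if $x,y,z\in X_1$; $=\chi_2(x,y,z)$ if $x,y,z\in X_2$; $=\chi_1(x,y,u_1)$ if $x,y\in X_1$ and $z\in X_2\setminus\{u_2^+\}$; $=\chi_2(u_2,y,z)$ if $x\in X_1\setminus\{u_1^-\}$ and $y,z\in X_2$; and for $x,y\in X_3$, $\chi_3(x,y,u_3)=\chi_1(x,y,u_1)$ if $x,y\in X_1$; $=\chi_2(x,y,u_2)$ if $x,y\in X_2$; $=1$ if $x\in X_1\setminus\{u_1^-\}$ and $y\in X_2\setminus\{u_2^+\}$. (These rules are consistent and determine $\chi_3$ on all triples.) *)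

(* Defs.v *)
From mathcomp Require Import all_boot.
From Stdlib Require Import Reals.

Set Implicit Arguments.
Unset Strict Implicit.
Unset Printing Implicit Defensive.

(* A sign function / chirotope on a finite set E is represented on a finType E,
   as a map chi : E -> E -> E -> bool, with [true] standing for +1 and
   [false] for -1; only its values on triples of distinct elements matter. *)

Section Chirotope.
Variable E : finType.
Variable chi : E -> E -> E -> bool.

Definition is_sign_function : Prop :=
  forall x y z : E, uniq [:: x; y; z] ->
    chi x y z = chi y z x /\ chi y x z = ~~ chi x y z.

Definition interiority : Prop :=
  forall t x y z : E, uniq [:: t; x; y; z] ->
    chi t y z -> chi x t z -> chi x y t -> chi x y z.

Definition transitivity : Prop :=
  forall s t x y z : E, uniq [:: s; t; x; y; z] ->
    chi t s x -> chi t s y -> chi t s z -> chi x y t -> chi y z t ->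
    chi x z t.

Definition chirotope : Prop :=
  [/\ is_sign_function, interiority & transitivity].

Definition orient (p q r : R * R) : R :=
  ((q.1 - p.1) * (r.2 - p.2) - (q.2 - p.2) * (r.1 - p.1))%R.

Definition realizable : Prop :=
  exists p : E -> R * R,
    forall x y z : E, uniq [:: x; y; z] ->
      orient (p x) (p y) (p z) <> 0%R /\
      (chi x y z = true <-> (0 < orient (p x) (p y) (p z))%R).

Definition extreme (x : E) : Prop :=
  exists y : E, y != x /\
    exists b : bool, forall z : E, z != x -> z != y -> chi x y z = b.

(* successor u^+ and predecessor u^- of u on the convex hull
   (default u if no such element exists; under the hypotheses it exists
   and is unique) *)
Definition succ (u : E) : E :=
  odflt u [pick y | (y != u) &&
                    [forall z, ((z != u) && (z != y)) ==> chi u y z]].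
Definition pred (u : E) : E :=
  odflt u [pick y | (y != u) &&
                    [forall z, ((z != u) && (z != y)) ==> chi y u z]].

Definition rooted_chirotope (u : E) : Prop := chirotope /\ extreme u.
Definition rooted_realizable (u : E) : Prop :=
  rooted_chirotope u /\ realizable.

End Chirotope.

(* Given (chi1,u1) on T1 = X1 u {u1} and (chi2,u2) on
   T2 = X2 u {u2}, the ground set X3 u {u3} is represented inside
   option (T1 + T2):
     None          = u3,
     Some (inl x)  = x in X1   (x <> u1); x0 is Some (inl u1^-),
     Some (inr y)  = y in X2 \ {u2^+}   (y <> u2, y <> u2^+).
   Thus u2^+ is identified with u1^- into x0.                              *)

Section Join.
Variables T1 T2 : finType.
Variable chi1 : T1 -> T1 -> T1 -> bool.
Variable u1 : T1.
Variable chi2 : T2 -> T2 -> T2 -> bool.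
Variable u2 : T2.

Local Notation raw := (option (T1 + T2))%type.

Definition u1m : T1 := pred chi1 u1.
Definition u2p : T2 := succ chi2 u2.

Definition in_join (a : raw) : bool :=
  match a with
  | None => true
  | Some (inl x) => x != u1
  | Some (inr y) => (y != u2) && (y != u2p)
  end.

Definition in1 (a : raw) : option T1 :=
  if a is Some (inl x) then Some x else None.

Definition in2 (a : raw) : option T2 :=
  match a with
  | Some (inr y) => Some y
  | Some (inl x) => if x == u1m then Some u2p else None
  | None => None
  end.

Definition is_x0 (a : raw) : bool := a == Some (inl u1m).

Definition in1' (a : raw) : bool := (in1 a != None) && ~~ is_x0 a.
Definition in2' (a : raw) : bool := (in2 a != None) && ~~ is_x0 a.

(* The defining rules of the join, for the ordered triple (a,b,c)
   exactly as listed (None when no rule applies to this ordering). *)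
Definition join_rule (a b c : raw) : option bool :=
  match c with
  | None =>
      if (in1 a, in1 b) is (Some x, Some y) then Some (chi1 x y u1)
      else if (in2 a, in2 b) is (Some x, Some y) then Some (chi2 x y u2)
      else if in1' a && in2' b then Some true
      else None
  | Some _ =>
      if (a == None) || (b == None) then None else
      if (in1 a, in1 b, in1 c) is (Some x, Some y, Some z)
        then Some (chi1 x y z)
      else if (in2 a, in2 b, in2 c) is (Some x, Some y, Some z)
        then Some (chi2 x y z)
      else if (in1 a, in1 b) is (Some x, Some y) then
        (if in2' c then Some (chi1 x y u1) else None)
      else if (in2 b, in2 c) is (Some y, Some z) then
        (if in1' a then Some (chi2 u2 y z) else None)
      else None
  end.

Fixpoint first_some (s : seq (option bool)) : bool :=
  match s with
  | [::] => true
  | Some v :: _ => v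
  | None :: s' => first_some s'
  end.

(* chi3 determined from the rules using the symmetries of a sign function *)
Definition join_chi_raw (a b c : raw) : bool :=
  first_some [:: join_rule a b c; join_rule b c a; join_rule c a b;
                 omap negb (join_rule b a c); omap negb (join_rule a c b);
                 omap negb (join_rule c b a)].

Definition join_type : finType := {a : raw | in_join a}.

Definition join_chi (a b c : join_type) : bool :=
  join_chi_raw (val a) (val b) (val c).

Definition join_root : join_type := exist (fun a : raw => in_join a) None isT.

End Join.

(* Main.v *)
Require Import Defs.
From mathcomp Require Import all_boot.
From Stdlib Require Import Reals Lra Psatz Classical.
Set Implicit Arguments. Unset Strict Implicit. Unset Printing Implicit Defensive.
Local Open Scope R_scope.

Record v3 := V3 { k1 : R; k2 : R; k3 : R }.
Definition det3 (p q r : v3) : R :=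
  k1 p * (k2 q * k3 r - k3 q * k2 r) - k2 p * (k1 q * k3 r - k3 q * k1 r)
  + k3 p * (k1 q * k2 r - k2 q * k1 r).
Definition e1 := V3 1 0 0.
Definition e3 := V3 0 0 1.
Definition hom (p : R * R) := V3 1 p.1 p.2.

Lemma orient_hom p q r : orient p q r = det3 (hom p) (hom q) (hom r).
Proof. case: p => ? ?; case: q => ? ?; case: r => ? ?; rewrite /orient /det3 /=; ring. Qed.

Fixpoint sumR {X : Type} (l : seq X) (f : X -> R) : R :=
  match l with [::] => 0 | x :: l' => f x + sumR l' f end.

Lemma sumR_ge (X : eqType) (l : seq X) f x :
  (forall y, 0 <= f y) -> x \in l -> f x <= sumR l f.
Proof.
move=> H; elim: l => [|y l IH] //=; rewrite in_cons => /orP [/eqP ->|xl].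
- have := (fun l => (fix F (l : seq X) : 0 <= sumR l f := match l with [::] => Rle_refl 0 | z :: l' => Rplus_le_le_0_compat _ _ (H z) (F l') end) l) l; lra.
- have := IH xl; have := H y; lra.
Qed.

Lemma sumR_ge0 (X : Type) (l : seq X) f : (forall y, 0 <= f y) -> 0 <= sumR l f.
Proof. move=> H; elim: l => [|y l IH] /=; [lra| have := H y; lra]. Qed.

Lemma large (X : finType) (A B : X -> R) : exists s, 0 < s /\
  forall x, B x <> 0 -> A x + s * B x <> 0 /\ (0 < A x + s * B x <-> 0 < B x).
Proof.
set f := fun x => Rabs (A x) * / Rabs (B x).
have f0 : forall x, 0 <= f x.
  move=> x; rewrite /f; have [->|nz] := Req_dec (B x) 0.
    rewrite Rabs_R0 Rinv_0; lra.
  apply: Rmult_le_pos; first exact: Rabs_pos.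
  apply/Rlt_le/Rinv_0_lt_compat/Rabs_pos_lt/nz.
set S := sumR (enum X) f.
have S0 : 0 <= S by apply: sumR_ge0.
exists (1 + S); split; first lra.
move=> x nz.
have fx : f x <= S by apply: sumR_ge => //; rewrite mem_enum.
have bp : 0 < Rabs (B x) by apply: Rabs_pos_lt.
have key : Rabs (A x) <= S * Rabs (B x).
  have : f x * Rabs (B x) = Rabs (A x).
    rewrite /f; field; lra.
  move=> <-; apply: Rmult_le_compat_r; lra.
have ha1 := Rle_abs (A x).
have ha2 : - A x <= Rabs (A x) by rewrite -Rabs_Ropp; apply: Rle_abs.
have [bn|bp'] : B x < 0 \/ 0 < B x by lra.
clearbody S f.
- rewrite (Rabs_left (B x)) in key; last lra.
  have h2 : A x + (1 + S) * B x < 0.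
    have -> : A x + (1 + S) * B x = (A x + S * B x) + B x by ring.
    have h : S * - B x = - (S * B x) by ring. lra.
  split; lra.
- rewrite (Rabs_right (B x)) in key; last lra.
  have h2 : 0 < A x + (1 + S) * B x.
    have -> : A x + (1 + S) * B x = (A x + S * B x) + B x by ring. lra.
  split; lra.
Qed.

Lemma seq_min (X : eqType) (f : X -> R) (l : seq X) : l <> [::] ->
  exists2 y, y \in l & forall z, z \in l -> f y <= f z.
Proof.
elim: l => [//|x l IH] _.
case: l IH => [|x' l] IH.
  exists x; first by rewrite mem_seq1.
  by move=> z; rewrite mem_seq1 => /eqP ->; lra.
have [y yl ym] := IH ltac:(done).
have [le|lt] := Rle_lt_dec (f x) (f y).
- exists x; first by rewrite in_cons eqxx.
  move=> z; rewrite in_cons => /orP [/eqP ->|zl]; first lra.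
  have := ym z zl; lra.
- exists y; first by rewrite in_cons yl orbT.
  move=> z; rewrite in_cons => /orP [/eqP ->|zl]; first lra.
  exact: ym.
Qed.

Definition cross (a b : v3) := V3 (k2 a * k3 b - k3 a * k2 b) (k3 a * k1 b - k1 a * k3 b) (k1 a * k2 b - k2 a * k1 b).
Definition Mn (a b p : v3) := V3 (det3 p b (cross a b)) (- det3 a b p) (det3 a p (cross a b)).
Definition Dn (a b : v3) := det3 a b (cross a b).
Lemma detM a b p q r : det3 (Mn a b p) (Mn a b q) (Mn a b r) = Dn a b ^ 2 * det3 p q r.
Proof. case: a => a1 a2 a3; case: b => b1 b2 b3; case: p => ? ? ?; case: q => ? ? ?; case: r => ? ? ?.
rewrite /det3 /Mn /Dn /cross /det3 /=. ring. Qed.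

Definition scale (k : R) (p : v3) := V3 (k * k1 p) (k * k2 p) (k * k3 p).
Definition Sh1 (t : R) (q : v3) := V3 (k1 q - t * k2 q) (k2 q) (k3 q).

Lemma det_scale k p q r : det3 (scale k p) (scale k q) (scale k r) = k ^ 3 * det3 p q r.
Proof. rewrite /det3 /scale /=; ring. Qed.
Lemma det_Sh1 t p q r : det3 (Sh1 t p) (Sh1 t q) (Sh1 t r) = det3 p q r.
Proof. rewrite /det3 /Sh1 /=; ring. Qed.

Definition realizes (T : finType) (chi : T -> T -> T -> bool) (p : T -> R * R) :=
  forall x y z : T, uniq [:: x; y; z] ->
      orient (p x) (p y) (p z) <> 0 /\
      (chi x y z = true <-> 0 < orient (p x) (p y) (p z)).

Lemma uniq3 (T : eqType) (x y z : T) : uniq [:: x; y; z] = [&& x != y, x != z & y != z].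
Proof. by rewrite /= !inE negb_or andbT andbA. Qed.

Lemma det_aba a b : det3 a b a = 0. Proof. rewrite /det3; ring. Qed.
Lemma det_aab a b : det3 a a b = 0. Proof. rewrite /det3; ring. Qed.
Lemma det_abb a b : det3 a b b = 0. Proof. rewrite /det3; ring. Qed.

Lemma sq_pos x : x <> 0 -> 0 < x ^ 2.
Proof. move=> h; case: (Rlt_or_le 0 x) => h'; [nra|]; have : x < 0 by lra. nra. Qed.

Lemma normalize (T : finType) (chi : T -> T -> T -> bool) (p : T -> R * R) (u x0 : T) :
  realizes chi p -> x0 != u -> (forall x, x != u -> x != x0 -> chi x0 u x) ->
  exists W : T -> v3,
   [/\ (forall x y z, uniq [:: x; y; z] -> det3 (W x) (W y) (W z) <> 0 /\
          (chi x y z <-> 0 < det3 (W x) (W y) (W z))),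
    W u = e3, W x0 = e1, (forall x, x != u -> 0 < k1 (W x)) &
    (forall x, x != u -> x != x0 -> k2 (W x) < 0)].
Proof.
move=> Hr x0u Hp.
have Hor : forall x, x != u -> x != x0 -> 0 < orient (p x0) (p u) (p x).
  move=> x xu xx0; have [_ H] := Hr x0 u x ltac:(by rewrite uniq3 x0u eq_sym xx0 eq_sym xu).
  by apply/H/Hp.
case: (classic (p x0 = p u)) => [eq|neq].
  have only2 : forall x, x = u \/ x = x0.
    move=> x; case: (eqVneq x u) => [->|xu]; [by left|right].
    case: (eqVneq x x0) => [//|xx0]; exfalso.
    have := Hor x xu xx0; rewrite eq /orient; lra.
  exists (fun x => if x == u then e3 else e1); split.
  - move=> x y z; rewrite uniq3.
    by case: (only2 x) => ->; case: (only2 y) => ->; case: (only2 z) => ->;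
      rewrite ?eqxx ?andbF.
  - by rewrite eqxx.
  - by rewrite (negbTE x0u).
  - by move=> x /negbTE ->; rewrite /=; lra.
  - by move=> x xu xx0; case: (only2 x) => E; [move: xu|move: xx0]; rewrite E eqxx.
set a := hom (p x0); set b := hom (p u).
have Dpos : 0 < Dn a b.
  have : Dn a b = (k1 a * k2 b - k2 a * k1 b) ^ 2 + (k1 a * k3 b - k3 a * k1 b) ^ 2 + (k2 a * k3 b - k3 a * k2 b) ^ 2.
    by rewrite /Dn /det3 /cross /=; ring.
  move=> ->; rewrite /a /b /hom /=.
  case: (p x0) neq => [a1 a2]; case: (p u) => [b1 b2] neq.
  have : a1 <> b1 \/ a2 <> b2.
    case: (classic (a1 = b1)) => [e|n]; [right => e2; apply: neq; congruence|by left].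
  simpl.
  have h1 := pow2_ge_0 (b2 - a2); have h2 := pow2_ge_0 (a1 * b2 - a2 * b1).
  have h3 := pow2_ge_0 (b1 - a1).
  case=> H.
    have h0 : 0 < (b1 - a1) ^ 2 by apply: sq_pos; lra.
    nra.
  have h0 : 0 < (b2 - a2) ^ 2 by apply: sq_pos; lra.
  nra.
set G := fun q => scale (/ Dn a b) (Mn a b q).
have detG : forall q r w, det3 (G q) (G r) (G w) = det3 q r w / Dn a b.
  move=> q r w; rewrite /G det_scale detM; field; lra.
have Ga : G a = e1.
  rewrite /G /scale /Mn /e1; congr V3 => /=; rewrite ?det_aba ?det_aab ?det_abb -/(Dn a b); field; lra.
have Gb : G b = e3.
  rewrite /G /scale /Mn /e3; congr V3 => /=; rewrite ?det_aba ?det_aab ?det_abb -/(Dn a b); field; lra.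
have G2 : forall x, k2 (G (hom (p x))) = - orient (p x0) (p u) (p x) / Dn a b.
  move=> x; rewrite orient_hom /G /scale /Mn /= -/a -/b; field; lra.
have [t [t0 Ht]] := large (fun x => k1 (G (hom (p x)))) (fun x => - k2 (G (hom (p x)))).
exists (fun x => Sh1 t (G (hom (p x)))); split.
- move=> x y z uxyz; rewrite det_Sh1 detG -!orient_hom.
  have [H1 H2] := Hr x y z uxyz.
  have Dinv : 0 < / Dn a b by apply: Rinv_0_lt_compat.
  rewrite /Rdiv; set o := orient _ _ _ in H1 H2 *; split.
    move=> /Rmult_integral [//|]; lra.
  apply: (iff_trans H2); split => H; nra.
- rewrite -/b Gb /Sh1 /e3 /=; congr V3; ring.
- rewrite -/a Ga /Sh1 /e1 /=; congr V3; ring.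
- move=> x xu; case: (eqVneq x x0) => [->|xx0].
    rewrite -/a Ga /Sh1 /e1 /=; lra.
  have hb : 0 < - k2 (G (hom (p x))).
    rewrite G2; have := Hor x xu xx0 => h.
    have h2 : 0 < orient (p x0) (p u) (p x) / Dn a b by apply: Rdiv_lt_0_compat.
    rewrite /Rdiv; lra.
  have [_ [_ h]] := Ht x ltac:(lra).
  change (0 < k1 (G (hom (p x))) - t * k2 (G (hom (p x)))).
  have h' := h hb; lra.
- move=> x xu xx0; change (k2 (G (hom (p x))) < 0); rewrite G2.
  have h2 : 0 < orient (p x0) (p u) (p x) / Dn a b by apply: Rdiv_lt_0_compat => //; apply: Hor.
  rewrite /Rdiv; lra.
Qed.

Definition flip2 (q : v3) := V3 (k1 q) (- k2 q) (k3 q).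
Definition refl (a : R * R) : R * R := (a.1, - a.2).
Lemma orient_refl a b c : orient (refl a) (refl b) (refl c) = - orient a b c.
Proof. rewrite /orient /refl /=; ring. Qed.
Lemma orient_swap a b c : orient b a c = - orient a b c.
Proof. rewrite /orient; ring. Qed.
Lemma orient_rot a b c : orient b c a = orient a b c.
Proof. rewrite /orient; ring. Qed.
Lemma det_flip2 p q r : det3 (flip2 p) (flip2 q) (flip2 r) = - det3 p q r.
Proof. rewrite /det3 /flip2 /=; ring. Qed.
Lemma det_swap p q r : det3 q p r = - det3 p q r.
Proof. rewrite /det3; ring. Qed.
Lemma det_rot p q r : det3 q r p = det3 p q r.
Proof. rewrite /det3; ring. Qed.

Lemma uniq_swap (T : eqType) (x y z : T) : uniq [:: x; y; z] -> uniq [:: y; x; z].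
Proof. by rewrite !uniq3 => /and3P [a b c]; rewrite eq_sym a c b. Qed.
Lemma uniq_rot (T : eqType) (x y z : T) : uniq [:: x; y; z] -> uniq [:: y; z; x].
Proof. by rewrite !uniq3 => /and3P [a b c]; rewrite c eq_sym a eq_sym b. Qed.

Lemma realizes_swap (T : finType) chi p :
  realizes chi p -> realizes (fun x y z : T => chi y x z) (fun e => refl (p e)).
Proof.
move=> Hr x y z u; have [H1 H2] := Hr y x z (uniq_swap u).
rewrite orient_refl -orient_swap; split => //.
Qed.

Lemma normalize2 (T : finType) (chi : T -> T -> T -> bool) (p : T -> R * R) (u x0 : T) :
  realizes chi p -> x0 != u -> (forall x, x != u -> x != x0 -> chi u x0 x) ->
  exists W : T -> v3,
   [/\ (forall x y z, uniq [:: x; y; z] -> det3 (W x) (W y) (W z) <> 0 /\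
          (chi x y z <-> 0 < det3 (W x) (W y) (W z))),
    W u = e3, W x0 = e1, (forall x, x != u -> 0 < k1 (W x)) &
    (forall x, x != u -> x != x0 -> 0 < k2 (W x))].
Proof.
move=> Hr x0u Hp.
have [W [H1 H2 H3 H4 H5]] := normalize (realizes_swap Hr) x0u Hp.
exists (fun x => flip2 (W x)); split.
- move=> x y z uxyz; rewrite det_flip2 -det_swap.
  have [h1 h2] := H1 y x z (uniq_swap uxyz); split => //.
- by rewrite H2 /flip2 /e3 /=; congr V3; ring.
- by rewrite H3 /flip2 /e1 /=; congr V3; ring.
- by move=> x xu; apply: H4.
- by move=> x xu xx0; have := H5 x xu xx0; rewrite /flip2 /=; lra.
Qed.

Definition gcot (U W A : R * R) :=
  ((W.1 - U.1) * (A.1 - U.1) + (W.2 - U.2) * (A.2 - U.2)) / orient U W A.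

Lemma cot_key (U W Z Y : R * R) : 0 < orient U W Z -> 0 < orient U W Y ->
  orient U Z Y <> 0 -> gcot U W Y <= gcot U W Z -> 0 < orient U Z Y.
Proof.
rewrite /gcot.
set ca := orient U W Z; set cb := orient U W Y; set X := orient U Z Y.
set dz := ((W.1 - U.1) * (Z.1 - U.1) + (W.2 - U.2) * (Z.2 - U.2)).
set dy := ((W.1 - U.1) * (Y.1 - U.1) + (W.2 - U.2) * (Y.2 - U.2)).
move=> ha hb hX hg.
set qa := dz / ca in hg; set qb := dy / cb in hg.
have Ez : dz = qa * ca by rewrite /qa; field; lra.
have Ey : dy = qb * cb by rewrite /qb; field; lra.
set E := (W.1 - U.1) ^ 2 + (W.2 - U.2) ^ 2.
have id : X * E = dz * cb - ca * dy.
  by rewrite /X /E /dz /dy /ca /cb /orient; ring.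
have h1 : 0 <= X * E.
  rewrite id Ez Ey.
  have h2 : 0 <= (qa - qb) * (ca * cb) by apply: Rmult_le_pos; nra.
  lra.
have Epos : 0 < E.
  rewrite /E; case: (Req_dec (W.1 - U.1) 0) => h.
    case: (Req_dec (W.2 - U.2) 0) => h'.
      exfalso; move: ha; rewrite /ca /orient h h'; lra.
    have h1' := sq_pos h'; have h2' := pow2_ge_0 (W.1 - U.1); lra.
  have h1' := sq_pos h; have h2' := pow2_ge_0 (W.2 - U.2); lra.
case: (Rlt_or_le 0 X) => // hx.
have hx' : X < 0 by lra.
nra.
Qed.

Lemma hull_pred (T : finType) (chi : T -> T -> T -> bool) p (u w : T) :
  realizes chi p -> w != u -> (forall z, z != u -> z != w -> chi u w z) ->
  exists y, y != u /\ forall z, z != u -> z != y -> chi y u z.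
Proof.
move=> Hr wu Hw.
set l := [seq z <- enum T | (z != u) && (z != w)].
have inl z : z != u -> z != w -> z \in l by move=> a b; rewrite mem_filter a b mem_enum.
have Hpos : forall z, z != u -> z != w -> 0 < orient (p u) (p w) (p z).
  move=> z zu zw; have [_ H] := Hr u w z ltac:(by rewrite uniq3 eq_sym wu eq_sym zu eq_sym zw).
  by apply/H/Hw.
case El: l => [|z0 l'].
  exists w; split => // z zu zw; by have := inl z zu zw; rewrite El.
have [y yl ym] := seq_min (fun z => gcot (p u) (p w) (p z)) (l := l) ltac:(by rewrite El).
move: (yl); rewrite mem_filter => /andP [/andP [yu yw] _].
exists y; split => // z zu zy.
have uyuz : uniq [:: y; u; z] by rewrite uniq3 yu eq_sym zy eq_sym zu.
have [H1 H2] := Hr y u z uyuz; apply/H2.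
rewrite orient_rot orient_rot.
case: (eqVneq z w) => [->|zw].
  by rewrite -orient_rot -orient_rot -orient_rot; apply: Hpos.
apply: cot_key; [exact: Hpos| exact: Hpos|idtac|exact: ym (inl z zu zw)].
by rewrite orient_rot; exact: H1.
Qed.

Lemma hull_succ (T : finType) (chi : T -> T -> T -> bool) p (u w : T) :
  realizes chi p -> w != u -> (forall z, z != u -> z != w -> chi w u z) ->
  exists y, y != u /\ forall z, z != u -> z != y -> chi u y z.
Proof.
move=> Hr wu Hw.
exact: (hull_pred (chi := fun x y z => chi y x z) (realizes_swap Hr) wu Hw).
Qed.

Ltac uniq_sub H :=
  rewrite uniq3; apply/and3P; split; apply/negP; move/eqP => ?; subst;
  move: H; rewrite /= !inE !eqxx /= ?orbT ?andbF //.

Lemma bool_iff (b1 b2 : bool) (P : Prop) : (b1 = true <-> P) -> (b2 = true <-> P) -> b1 = b2.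
Proof.
case: b1; case: b2 => // h1 h2.
  by have := proj2 h2 (proj1 h1 erefl).
by have := proj2 h1 (proj1 h2 erefl).
Qed.

Lemma bool_neg (b1 b2 : bool) (o : R) : (b1 = true <-> 0 < o) -> (b2 = true <-> 0 < - o) -> o <> 0 -> b2 = ~~ b1.
Proof.
move=> h1 h2 h0; case: b1 h1; case: b2 h2 => h2 h1 //=.
  have a := proj1 h1 erefl; have b := proj1 h2 erefl; lra.
case: (Rlt_or_le 0 o) => h.
  by have := proj2 h1 h.
have h' : 0 < - o by lra.
by have := proj2 h2 h'.
Qed.

Lemma realizes_chirotope (T : finType) (chi : T -> T -> T -> bool) p :
  realizes chi p -> chirotope chi.
Proof.
move=> Hr; split.
- move=> x y z u.
  have [a1 a2] := Hr x y z u; have [b1 b2] := Hr y z x (uniq_rot u); have [c1 c2] := Hr y x z (uniq_swap u).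
  split.
    by apply: (bool_iff a2); rewrite -(orient_rot (p x)).
  by apply: (bool_neg a2) => //; rewrite -orient_swap.
- move=> t x y z u h1 h2 h3.
  have u1 : uniq [:: t; y; z] by uniq_sub u.
  have u2 : uniq [:: x; t; z] by uniq_sub u.
  have u3 : uniq [:: x; y; t] by uniq_sub u.
  have u4 : uniq [:: x; y; z] by uniq_sub u.
  have o1 := proj1 (proj2 (Hr _ _ _ u1)) h1.
  have o2 := proj1 (proj2 (Hr _ _ _ u2)) h2.
  have o3 := proj1 (proj2 (Hr _ _ _ u3)) h3.
  apply/(proj2 (Hr _ _ _ u4)).
  have : orient (p x) (p y) (p z) = orient (p t) (p y) (p z) + orient (p x) (p t) (p z) + orient (p x) (p y) (p t) by rewrite /orient; ring.
  lra.
- move=> s t x y z u h1 h2 h3 h4 h5.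
  have u1 : uniq [:: t; s; x] by uniq_sub u.
  have u2 : uniq [:: t; s; y] by uniq_sub u.
  have u3 : uniq [:: t; s; z] by uniq_sub u.
  have u4 : uniq [:: x; y; t] by uniq_sub u.
  have u5 : uniq [:: y; z; t] by uniq_sub u.
  have u6 : uniq [:: x; z; t] by uniq_sub u.
  have o1 := proj1 (proj2 (Hr _ _ _ u1)) h1.
  have o2 := proj1 (proj2 (Hr _ _ _ u2)) h2.
  have o3 := proj1 (proj2 (Hr _ _ _ u3)) h3.
  have o4 := proj1 (proj2 (Hr _ _ _ u4)) h4.
  have o5 := proj1 (proj2 (Hr _ _ _ u5)) h5.
  apply/(proj2 (Hr _ _ _ u6)).
  move: o1 o2 o3 o4 o5; rewrite /orient.
  case: (p s) => s1 s2; case: (p t) => t1 t2; case: (p x) => x1 x2; case: (p y) => y1 y2; case: (p z) => z1 z2 /=.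
  move=> o1 o2 o3 o4 o5.
  set SX := (s1 - t1) * (x2 - t2) - (s2 - t2) * (x1 - t1) in o1.
  set SY := (s1 - t1) * (y2 - t2) - (s2 - t2) * (y1 - t1) in o2.
  set SZ := (s1 - t1) * (z2 - t2) - (s2 - t2) * (z1 - t1) in o3.
  have eXY : (y1 - x1) * (t2 - x2) - (y2 - x2) * (t1 - x1) = (x1 - t1) * (y2 - t2) - (x2 - t2) * (y1 - t1) by ring.
  have eYZ : (z1 - y1) * (t2 - y2) - (z2 - y2) * (t1 - y1) = (y1 - t1) * (z2 - t2) - (y2 - t2) * (z1 - t1) by ring.
  have eXZ : (z1 - x1) * (t2 - x2) - (z2 - x2) * (t1 - x1) = (x1 - t1) * (z2 - t2) - (x2 - t2) * (z1 - t1) by ring.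
  rewrite eXY in o4; rewrite eYZ in o5; rewrite eXZ.
  set XY := (x1 - t1) * (y2 - t2) - (x2 - t2) * (y1 - t1) in o4.
  set YZ := (y1 - t1) * (z2 - t2) - (y2 - t2) * (z1 - t1) in o5.
  set XZ := (x1 - t1) * (z2 - t2) - (x2 - t2) * (z1 - t1).
  have id : SY * XZ = SX * YZ + SZ * XY by rewrite /SY /XZ /SX /YZ /SZ /XY; ring.
  have : 0 < SY * XZ by rewrite id; nra.
  nra.
Qed.

Lemma pred_spec (T : finType) (chi : T -> T -> T -> bool) u :
  (exists y, y != u /\ forall z, z != u -> z != y -> chi y u z) ->
  Defs.pred chi u != u /\ forall z, z != u -> z != Defs.pred chi u -> chi (Defs.pred chi u) u z.
Proof.
move=> [y [yu Hy]]; rewrite /Defs.pred; case: pickP => [v /andP [vu /forallP H] | H0] /=.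
  split => // z zu zv; have := H z; by rewrite zu zv.
exfalso; have := H0 y; rewrite yu /=; move/negP; apply.
apply/forallP => z; apply/implyP => /andP [zu zy]; exact: Hy.
Qed.

Lemma succ_spec (T : finType) (chi : T -> T -> T -> bool) u :
  (exists y, y != u /\ forall z, z != u -> z != y -> chi u y z) ->
  Defs.succ chi u != u /\ forall z, z != u -> z != Defs.succ chi u -> chi u (Defs.succ chi u) z.
Proof.
move=> [y [yu Hy]]; rewrite /Defs.succ; case: pickP => [v /andP [vu /forallP H] | H0] /=.
  split => // z zu zv; have := H z; by rewrite zu zv.
exfalso; have := H0 y; rewrite yu /=; move/negP; apply.
apply/forallP => z; apply/implyP => /andP [zu zy]; exact: Hy.
Qed.

Lemma rooted_nb (T : finType) (chi : T -> T -> T -> bool) (u : T) p :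
  realizes chi p -> extreme chi u ->
  (exists y, y != u /\ forall z, z != u -> z != y -> chi y u z) /\
  (exists y, y != u /\ forall z, z != u -> z != y -> chi u y z).
Proof.
move=> Hr [y [yu [b Hb]]].
have [Hsf _ _] := realizes_chirotope Hr.
case: b Hb => Hb.
  have Hs : forall z, z != u -> z != y -> chi u y z by move=> z zu zy; rewrite Hb.
  split; last by exists y.
  exact: hull_pred Hr yu Hs.
have Hp : forall z, z != u -> z != y -> chi y u z.
  move=> z zu zy; have [_ ->] := Hsf u y z ltac:(by rewrite uniq3 eq_sym yu eq_sym zu eq_sym zy).
  by rewrite Hb.
split; first by exists y.
exact: hull_succ Hr yu Hp.
Qed.


Definition Sh (t : R) (q : v3) := V3 (k1 q) (k2 q) (k3 q + t * k2 q).

Section JoinProof.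
Variables (T1 T2 : finType) (chi1 : T1 -> T1 -> T1 -> bool) (u1 : T1)
  (chi2 : T2 -> T2 -> T2 -> bool) (u2 : T2).
Local Notation raw := (option (T1 + T2))%type.
Local Notation x0 := (u1m chi1 u1).
Local Notation y0 := (u2p chi2 u2).
Local Notation inj := (in_join u1 chi2 u2).
Local Notation in2 := (in2 chi1 u1 chi2 u2).
Local Notation in1' := (in1' chi1 u1 (T2 := T2)).
Local Notation in2' := (in2' chi1 u1 chi2 u2).
Local Notation rule := (join_rule chi1 u1 chi2 u2).

Variables (W1 : T1 -> v3) (W2 : T2 -> v3).
Hypothesis HW1 : forall x y z, uniq [:: x; y; z] -> det3 (W1 x) (W1 y) (W1 z) <> 0 /\
          (chi1 x y z <-> 0 < det3 (W1 x) (W1 y) (W1 z)).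
Hypothesis HW1u : W1 u1 = e3.
Hypothesis HW1x0 : W1 x0 = e1.
Hypothesis HW1p : forall x, x != u1 -> 0 < k1 (W1 x).
Hypothesis HW1n : forall x, x != u1 -> x != x0 -> k2 (W1 x) < 0.
Hypothesis HW2 : forall x y z, uniq [:: x; y; z] -> det3 (W2 x) (W2 y) (W2 z) <> 0 /\
          (chi2 x y z <-> 0 < det3 (W2 x) (W2 y) (W2 z)).
Hypothesis HW2u : W2 u2 = e3.
Hypothesis HW2x0 : W2 y0 = e1.
Hypothesis HW2p : forall x, x != u2 -> 0 < k1 (W2 x).
Hypothesis HW2n : forall x, x != u2 -> x != y0 -> 0 < k2 (W2 x).
Hypothesis Hx0 : x0 != u1.
Hypothesis Hy0 : y0 != u2.

Definition Vr (s : R) (a : raw) : v3 :=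
  match a with None => e3 | Some (inl x) => Sh (- s) (W1 x) | Some (inr y) => Sh s (W2 y) end.
Definition Dr s (a b c : raw) := det3 (Vr s a) (Vr s b) (Vr s c).

Lemma Dr_lin s a b c : Dr s a b c = Dr 0 a b c + s * (Dr 1 a b c - Dr 0 a b c).
Proof.
by case: a => [[?|?]|]; case: b => [[?|?]|]; case: c => [[?|?]|];
  rewrite /Dr /Vr /Sh /det3 /e3 /=; ring.
Qed.

Lemma V_in1 s a x : in1 a = Some x -> Vr s a = Sh (- s) (W1 x).
Proof. by case: a => [[x'|y']|] //= [->]. Qed.

Lemma V_in2 s a y : inj a -> in2 a = Some y -> Vr s a = Sh s (W2 y).
Proof.
case: a => [[x|y']|] //=.
  move=> _; case: eqP => // -> [<-]; rewrite HW1x0 HW2x0 /Sh /e1 /=; congr V3; ring.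
by move=> _ [->].
Qed.

Lemma in1_ne a x : inj a -> in1 a = Some x -> x != u1.
Proof. by case: a => [[x'|y']|] //= h [<-]. Qed.

Lemma in2_ne a y : inj a -> in2 a = Some y -> y != u2.
Proof.
case: a => [[x|y']|] //=.
  by move=> _; case: eqP => // _ [<-].
by move=> /andP [h _] [<-].
Qed.

Lemma in1_inj (a b : raw) x : in1 a = Some x -> in1 b = Some x -> a = b.
Proof. by case: a => [[?|?]|] //=; case: b => [[?|?]|] //= [->] [->]. Qed.

Lemma in2_inj a b y : inj a -> inj b -> in2 a = Some y -> in2 b = Some y -> a = b.
Proof.
case: a => [[xa|ya]|] //=; case: b => [[xb|yb]|] //=.
- by move=> _ _; case: eqP => // ->; case: eqP => // ->.
- move=> _ /andP [_ h]; case: eqP => // -> [<-] [E]; by rewrite E eqxx in h.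
- move=> /andP [_ h] _; case: eqP => // -> [E] [E']; by rewrite E E' eqxx in h.
- by move=> _ _ [->] [->].
Qed.

Lemma in1'P a : in1' a -> exists x, a = Some (inl x) /\ x != x0.
Proof.
case: a => [[x|y]|] //=; rewrite /in1' /is_x0 /=.
by move=> h; exists x; split => //; apply: contra h => /eqP ->.
Qed.

Lemma in2'P a : inj a -> in2' a -> exists y, a = Some (inr y) /\ y != y0 /\ y != u2.
Proof.
case: a => [[x|y]|] //=; rewrite /in2' /is_x0 /=.
  move=> _; case: (eqVneq x x0) => [->|nx] /=; rewrite ?eqxx //.
by move=> /andP [h1 h2] _; exists y.
Qed.


Lemma det_ShShe3 t t' p q : det3 (Sh t p) (Sh t' q) e3 = det3 p q e3.
Proof. rewrite /det3 /Sh /e3 /=; ring. Qed.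
Lemma det_Sh3 t p q r : det3 (Sh t p) (Sh t q) (Sh t r) = det3 p q r.
Proof. rewrite /det3 /Sh /=; ring. Qed.
Lemma det_C6 p q r : det3 (Sh (-1) p) (Sh (-1) q) (Sh 1 r) - det3 (Sh (-0) p) (Sh (-0) q) (Sh 0 r) = 2 * k2 r * det3 p q e3.
Proof. rewrite /det3 /Sh /e3 /=; ring. Qed.
Lemma det_C7 p q r : det3 (Sh (-1) p) (Sh 1 q) (Sh 1 r) - det3 (Sh (-0) p) (Sh 0 q) (Sh 0 r) = - 2 * k2 p * det3 e3 q r.
Proof. rewrite /det3 /Sh /e3 /=; ring. Qed.

Variable s : R.
Definition Bd (a b c : raw) := Dr 1 a b c - Dr 0 a b c.
Hypothesis Hs : forall a b c, Bd a b c <> 0 -> Dr s a b c <> 0 /\ (0 < Dr s a b c <-> 0 < Bd a b c).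

Lemma uniq_ne (X : eqType) (a b c : X) : uniq [:: a; b; c] -> [/\ a != b, a != c & b != c].
Proof. by rewrite uniq3 => /and3P. Qed.

Lemma in1_neq (a b : raw) x y : a != b -> in1 a = Some x -> in1 b = Some y -> x != y.
Proof. move=> ab ea eb; apply/eqP => E; subst; move/eqP: ab; apply; exact: in1_inj ea eb. Qed.

Lemma in2_neq a b x y : inj a -> inj b -> a != b -> in2 a = Some x -> in2 b = Some y -> x != y.
Proof. move=> ia ib ab ea eb; apply/eqP => E; subst; move/eqP: ab; apply; exact: in2_inj ia ib ea eb. Qed.

Lemma C1 a b x y : inj a -> inj b -> a != b -> in1 a = Some x -> in1 b = Some y ->
  Dr s a b None <> 0 /\ (chi1 x y u1 = true <-> 0 < Dr s a b None).
Proof.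
move=> ia ib ab ea eb.
rewrite /Dr (V_in1 s ea) (V_in1 s eb) /= det_ShShe3 -HW1u.
apply: HW1; rewrite uniq3 (in1_neq ab ea eb) (in1_ne ia ea) (in1_ne ib eb) //.
Qed.

Lemma C2 a b x y : inj a -> inj b -> a != b -> in2 a = Some x -> in2 b = Some y ->
  Dr s a b None <> 0 /\ (chi2 x y u2 = true <-> 0 < Dr s a b None).
Proof.
move=> ia ib ab ea eb.
rewrite /Dr (V_in2 s ia ea) (V_in2 s ib eb) /= det_ShShe3 -HW2u.
apply: HW2; rewrite uniq3 (in2_neq ia ib ab ea eb) (in2_ne ia ea) (in2_ne ib eb) //.
Qed.

Lemma C3 a b : inj a -> inj b -> in1' a = true -> in2' b = true ->
  Dr s a b None <> 0 /\ (true = true <-> 0 < Dr s a b None).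
Proof.
move=> ia ib h1 h2.
have [x [Ea xx0]] := in1'P h1; have [y [Eb [yy0 yu2]]] := in2'P ib h2; subst a b.
have xu1 : x != u1 := ia.
rewrite /Dr /= det_ShShe3.
have p1 := HW1p xu1; have n1 := HW1n xu1 xx0; have p2 := HW2p yu2; have n2 := HW2n yu2 yy0.
have : 0 < det3 (W1 x) (W2 y) e3 by rewrite /det3 /e3 /=; nra.
move=> h; split; [lra|split => //].
Qed.

Lemma C4 a b c x y z : inj a -> inj b -> inj c -> uniq [:: a; b; c] ->
  in1 a = Some x -> in1 b = Some y -> in1 c = Some z ->
  Dr s a b c <> 0 /\ (chi1 x y z = true <-> 0 < Dr s a b c).
Proof.
move=> ia ib ic /uniq_ne [ab ac bc] ea eb ec.
rewrite /Dr (V_in1 s ea) (V_in1 s eb) (V_in1 s ec) det_Sh3.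
apply: HW1; rewrite uniq3 (in1_neq ab ea eb) (in1_neq ac ea ec) (in1_neq bc eb ec) //.
Qed.

Lemma C5 a b c x y z : inj a -> inj b -> inj c -> uniq [:: a; b; c] ->
  in2 a = Some x -> in2 b = Some y -> in2 c = Some z ->
  Dr s a b c <> 0 /\ (chi2 x y z = true <-> 0 < Dr s a b c).
Proof.
move=> ia ib ic /uniq_ne [ab ac bc] ea eb ec.
rewrite /Dr (V_in2 s ia ea) (V_in2 s ib eb) (V_in2 s ic ec) det_Sh3.
apply: HW2; rewrite uniq3 (in2_neq ia ib ab ea eb) (in2_neq ia ic ac ea ec) (in2_neq ib ic bc eb ec) //.
Qed.

Lemma C6 a b c x y : inj a -> inj b -> inj c -> uniq [:: a; b; c] ->
  in1 a = Some x -> in1 b = Some y -> in2' c = true ->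
  Dr s a b c <> 0 /\ (chi1 x y u1 = true <-> 0 < Dr s a b c).
Proof.
move=> ia ib ic /uniq_ne [ab ac bc] ea eb ec.
have [z [-> [zy0 zu2]]] := in2'P ic ec.
have hB : Bd a b (Some (inr z)) = 2 * k2 (W2 z) * det3 (W1 x) (W1 y) (W1 u1).
  by rewrite /Bd /Dr (V_in1 1 ea) (V_in1 1 eb) (V_in1 0 ea) (V_in1 0 eb) /= det_C6 HW1u.
have [H1 H2] := HW1 (x := x) (y := y) (z := u1)
  ltac:(by rewrite uniq3 (in1_neq ab ea eb) (in1_ne ia ea) (in1_ne ib eb)).
have p2 := HW2n zu2 zy0.
have Bnz : Bd a b (Some (inr z)) <> 0.
  rewrite hB => E; apply: H1; move: E => /Rmult_integral [/Rmult_integral [|]|] //; lra.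
have [K1 K2] := Hs Bnz; split => //.
apply: (iff_trans H2); apply: (iff_trans _ (iff_sym K2)); rewrite hB.
split => h; first nra.
case: (Rlt_or_le 0 (det3 (W1 x) (W1 y) (W1 u1))) => // h'; nra.
Qed.

Lemma C7 a b c y z : inj a -> inj b -> inj c -> uniq [:: a; b; c] ->
  in1' a = true -> in2 b = Some y -> in2 c = Some z ->
  Dr s a b c <> 0 /\ (chi2 u2 y z = true <-> 0 < Dr s a b c).
Proof.
move=> ia ib ic /uniq_ne [ab ac bc] ea eb ec.
have [x [Ea xx0]] := in1'P ea; subst a.
have xu1 : x != u1 := ia.
have hB : Bd (Some (inl x)) b c = - 2 * k2 (W1 x) * det3 (W2 u2) (W2 y) (W2 z).
  by rewrite /Bd /Dr (V_in2 1 ib eb) (V_in2 1 ic ec) (V_in2 0 ib eb) (V_in2 0 ic ec) /= det_C7 HW2u.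
have [H1 H2] := HW2 (x := u2) (y := y) (z := z)
  ltac:(by rewrite uniq3 (in2_neq ib ic bc eb ec) eq_sym (in2_ne ib eb) eq_sym (in2_ne ic ec)).
have p2 := HW1n xu1 xx0.
have Bnz : Bd (Some (inl x)) b c <> 0.
  rewrite hB => E; apply: H1; move: E => /Rmult_integral [/Rmult_integral [|]|] //; lra.
have [K1 K2] := Hs Bnz; split => //.
apply: (iff_trans H2); apply: (iff_trans _ (iff_sym K2)); rewrite hB.
split => h; first nra.
case: (Rlt_or_le 0 (det3 (W2 u2) (W2 y) (W2 z))) => // h'; nra.
Qed.

Ltac dm1 :=  match goal with
  | |- context [@Defs.in1 ?A ?B ?t] => let E := fresh "E" in case E: (@Defs.in1 A B t) => [?|]; cbn -[Defs.in1 Defs.in2 Defs.in1' Defs.in2']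
  end.
Ltac dm2 :=  match goal with
  | |- context [@Defs.in2 ?A ?B ?c1 ?w1 ?c2 ?w2 ?t] => let E := fresh "E" in case E: (@Defs.in2 A B c1 w1 c2 w2 t) => [?|]; cbn -[Defs.in1 Defs.in2 Defs.in1' Defs.in2']
  end.
Ltac dm3 :=  match goal with
  | |- context [@Defs.in1' ?A ?B ?c1 ?w1 ?t] => let E := fresh "E" in case E: (@Defs.in1' A B c1 w1 t); cbn -[Defs.in1 Defs.in2 Defs.in1' Defs.in2']
  end.
Ltac dm4 :=  match goal with
  | |- context [@Defs.in2' ?A ?B ?c1 ?w1 ?c2 ?w2 ?t] => let E := fresh "E" in case E: (@Defs.in2' A B c1 w1 c2 w2 t); cbn -[Defs.in1 Defs.in2 Defs.in1' Defs.in2']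
  end.
Ltac dmatch := repeat progress (try dm1; try dm2; try dm3; try dm4).

Ltac leaf :=
  first [ by [] | case=> <-;
  solve [ eapply C4; eassumption | eapply C5; eassumption | eapply C6; eassumption
        | eapply C7; eassumption | eapply C1; eassumption | eapply C2; eassumption
        | eapply C3; eassumption ] ].

Lemma rule_sound a b c v : inj a -> inj b -> inj c -> uniq [:: a; b; c] ->
  rule a b c = Some v -> Dr s a b c <> 0 /\ (v = true <-> 0 < Dr s a b c).
Proof.
move=> ia ib ic u; have [ab ac bc] := uniq_ne u.
rewrite /join_rule; case: c ic u ac bc => [c|] ic u ac bc;
  [case: ifP => _; [by move=> E; discriminate E|] | ]; dmatch; leaf.
Qed.

Lemma isx0_l x : @is_x0 T1 T2 chi1 u1 (Some (inl x)) = (x == x0).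
Proof. by rewrite /is_x0; apply/eqP/eqP => [[]|->]. Qed.
Lemma isx0_r y : @is_x0 T1 T2 chi1 u1 (Some (inr y)) = false.
Proof. by []. Qed.

Lemma cat4 a : inj a -> [\/ a = None, a = Some (inl x0),
   exists x, [/\ a = Some (inl x), x != x0 & x != u1] |
   exists y, [/\ a = Some (inr y), y != y0 & y != u2]].
Proof.
case: a => [[x|y]|] /=; last by constructor 1.
  move=> xu; case: (eqVneq x x0) => [->|hx]; first by constructor 2.
  by constructor 3; exists x.
by case/andP => h1 h2; constructor 4; exists y.
Qed.

Ltac simpl_tot :=
  rewrite /join_rule /Defs.in1' /Defs.in2' /Defs.in2 /= ?isx0_l ?isx0_r ?eqxx /=;
  repeat match goal with H : (_ == _) = false |- _ => (try rewrite H /=); clear H end;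
  rewrite /= ?eqxx /=.

Lemma rule_total a b c : inj a -> inj b -> inj c -> uniq [:: a; b; c] ->
  has isSome [:: rule a b c; rule b c a; rule c a b; omap negb (rule b a c);
                 omap negb (rule a c b); omap negb (rule c b a)].
Proof.
move=> ia ib ic; rewrite uniq3.
case: (cat4 ia) => [->|->|[x [-> hx hx']]|[y [-> hy hy']]];
case: (cat4 ib) => [->|->|[x1 [-> hx1 hx1']]|[y1 [-> hy1 hy1']]];
case: (cat4 ic) => [->|->|[x2 [-> hx2 hx2']]|[y2 [-> hy2 hy2']]];
rewrite ?eqxx ?andbF //= => _;
repeat match goal with H : is_true (?x != ?y) |- _ => move/negbTE: H => H end.
all: simpl_tot.
all: done.
Qed.

Lemma first_some_iff (l : seq (option bool)) (P : Prop) :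
  (forall v, Some v \in l -> (v = true <-> P)) -> has isSome l -> (first_some l = true <-> P).
Proof.
elim: l => [//|o l IH] H /=.
case: o H => [v|] H /=.
  by move=> _; apply: H; rewrite inE eqxx.
move=> hl; apply: IH => // v hv; apply: H; by rewrite inE hv orbT.
Qed.

Lemma Dr_bca a b c : Dr s b c a = Dr s a b c. Proof. rewrite /Dr /det3; ring. Qed.
Lemma Dr_cab a b c : Dr s c a b = Dr s a b c. Proof. rewrite /Dr /det3; ring. Qed.
Lemma Dr_bac a b c : Dr s b a c = - Dr s a b c. Proof. rewrite /Dr /det3; ring. Qed.
Lemma Dr_acb a b c : Dr s a c b = - Dr s a b c. Proof. rewrite /Dr /det3; ring. Qed.
Lemma Dr_cba a b c : Dr s c b a = - Dr s a b c. Proof. rewrite /Dr /det3; ring. Qed.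

Lemma neg_iff (w : bool) (D : R) : D <> 0 -> (w = true <-> 0 < - D) -> (~~ w = true <-> 0 < D).
Proof.
move=> h0 [h1 h2]; case: w h1 h2 => /= h1 h2; split => // h.
- by have := h1 erefl; lra.
- case: (Rlt_or_le 0 D) => // h'; exfalso; have : 0 < - D by lra.
  by move/h2.
Qed.

Lemma join_char a b c : inj a -> inj b -> inj c -> uniq [:: a; b; c] ->
  Dr s a b c <> 0 /\ (join_chi_raw chi1 u1 chi2 u2 a b c = true <-> 0 < Dr s a b c).
Proof.
move=> ia ib ic u.
have u1' := uniq_rot u; have u2' := uniq_rot u1'.
have u3 := uniq_swap u; have u4 := uniq_rot u3; have u5 := uniq_rot u4.
have D0 : Dr s a b c <> 0.
  have := rule_total ia ib ic u; rewrite /= !orbA.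
  case E1: (rule a b c) => [w|] /=; first by have [] := rule_sound ia ib ic u E1.
  case E2: (rule b c a) => [w|] /=; first by have [] := rule_sound ib ic ia u1' E2; rewrite Dr_bca.
  case E3: (rule c a b) => [w|] /=; first by have [] := rule_sound ic ia ib u2' E3; rewrite Dr_cab.
  case E4: (rule b a c) => [w|] /=.
    have [h _] := rule_sound ib ia ic u3 E4; rewrite Dr_bac in h; lra.
  case E5: (rule a c b) => [w|] /=.
    have [h _] := rule_sound ia ic ib u4 E5; rewrite Dr_acb in h; lra.
  case E6: (rule c b a) => [w|] //=.
  have [h _] := rule_sound ic ib ia u5 E6; rewrite Dr_cba in h; lra.
split => //.
apply: first_some_iff; last exact: rule_total ia ib ic u.
move=> v; rewrite !inE => /or4P [| | |/or3P [| |]] /eqP E.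
- by have [_ h] := rule_sound ia ib ic u (esym E).
- by have [_ h] := rule_sound ib ic ia u1' (esym E); rewrite -Dr_bca.
- by have [_ h] := rule_sound ic ia ib u2' (esym E); rewrite -Dr_cab.
- case E': (rule b a c) E => [w|] // [->].
  have [_ h] := rule_sound ib ia ic u3 E'; rewrite Dr_bac in h; exact: neg_iff.
- case E': (rule a c b) E => [w|] // [->].
  have [_ h] := rule_sound ia ic ib u4 E'; rewrite Dr_acb in h; exact: neg_iff.
- case E': (rule c b a) E => [w|] // [->].
  have [_ h] := rule_sound ic ib ia u5 E'; rewrite Dr_cba in h; exact: neg_iff.
Qed.

Local Notation J := (@join_type T1 T2 u1 chi2 u2).
Local Notation chi3 := (@join_chi T1 T2 chi1 u1 chi2 u2).

Lemma chi3_char (a b c : J) : uniq [:: a; b; c] ->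
  Dr s (val a) (val b) (val c) <> 0 /\ (chi3 a b c <-> 0 < Dr s (val a) (val b) (val c)).
Proof.
move=> u.
have u' : uniq [:: val a; val b; val c].
  have -> : [:: val a; val b; val c] = map val [:: a; b; c] by [].
  by rewrite map_inj_uniq //; exact: val_inj.
exact: join_char (valP a) (valP b) (valP c) u'.
Qed.

Lemma V_k1 a : inj a -> a != None -> 0 < k1 (Vr s a).
Proof.
case: a => [[x|y]|] //= h _; first exact: HW1p.
by case/andP: h => h _; apply: HW2p.
Qed.

Lemma join_realizable : realizable chi3.
Proof.
have [t [t0 Ht]] := large (fun a : raw => k3 (Vr s a)) (fun a => k1 (Vr s a)).
set eps := / t.
have eps0 : 0 < eps by apply: Rinv_0_lt_compat.
pose F a := V3 (k1 (Vr s a) + eps * k3 (Vr s a)) (k2 (Vr s a)) (k3 (Vr s a)).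
have F1 : forall a, inj a -> 0 < k1 (F a).
  move=> a ia; rewrite /F /=; case: (eqVneq a None) => [->|an].
    rewrite /= /e3 /=; lra.
  have k := V_k1 ia an.
  have [_ [_ h]] := Ht a ltac:(lra).
  have h' := h k.
  have -> : k1 (Vr s a) + eps * k3 (Vr s a) = eps * (k3 (Vr s a) + t * k1 (Vr s a)).
    by rewrite /eps; field; lra.
  exact: Rmult_lt_0_compat.
have detF : forall a b c, det3 (F a) (F b) (F c) = Dr s a b c.
  by move=> a b c; rewrite /Dr /det3 /F /=; ring.
clearbody F.
pose P a := (k2 (F a) / k1 (F a), k3 (F a) / k1 (F a)).
have oP : forall a b c, inj a -> inj b -> inj c ->
    orient (P a) (P b) (P c) = Dr s a b c / (k1 (F a) * k1 (F b) * k1 (F c)).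
  move=> a b c ia ib ic; rewrite -detF /orient /P /det3 /=.
  have := F1 a ia; have := F1 b ib; have := F1 c ic => h1 h2 h3.
  field; lra.
exists (fun e : J => P (val e)) => a b c u.
have [H1 H2] := chi3_char u.
rewrite oP; try exact: valP.
have hp : 0 < / (k1 (F (val a)) * k1 (F (val b)) * k1 (F (val c))).
  apply: Rinv_0_lt_compat.
  have := F1 _ (valP a); have := F1 _ (valP b); have := F1 _ (valP c) => h1 h2 h3.
  apply: Rmult_lt_0_compat => //; exact: Rmult_lt_0_compat.
rewrite /Rdiv; set D := Dr s _ _ _ in H1 H2 *; split.
  move=> /Rmult_integral [//|]; lra.
apply: (iff_trans H2); split => h; nra.
Qed.

Lemma root_extreme : extreme chi3 (@join_root T1 T2 u1 chi2 u2).
Proof.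
set r := @join_root T1 T2 u1 chi2 u2.
pose l := [seq e <- enum J | e != r].
have x0J : inj (Some (inl x0)) by [].
set e0 : J := exist _ (Some (inl x0)) x0J.
have e0l : e0 \in l by rewrite mem_filter mem_enum andbT.
have [y yl ym] := seq_min (fun e : J => k2 (Vr s (val e)) / k1 (Vr s (val e))) (l := l)
  ltac:(by move=> E; rewrite E in e0l).
move: yl; rewrite mem_filter => /andP [yr _].
exists y; split => //; exists true => z zr zy.
have u : uniq [:: r; y; z] by rewrite uniq3 eq_sym yr eq_sym zr eq_sym zy.
have [H1 H2] := chi3_char u.
apply/idP/H2.
have vy : val y != None by apply: contra yr => /eqP E; apply/eqP/val_inj.
have vz : val z != None by apply: contra zr => /eqP E; apply/eqP/val_inj.
have ky := V_k1 (valP y) vy; have kz := V_k1 (valP z) vz.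
have hz := ym z ltac:(by rewrite mem_filter zr mem_enum).
move: H1; rewrite /Dr /= /det3 /e3 /=.
set Y1 := k1 (Vr s (val y)) in ky hz *; set Y2 := k2 (Vr s (val y)) in hz *.
set Z1 := k1 (Vr s (val z)) in kz hz *; set Z2 := k2 (Vr s (val z)) in hz *.
move=> H1.
have q1 : Y2 = Y2 / Y1 * Y1 by field; lra.
have q2 : Z2 = Z2 / Z1 * Z1 by field; lra.
set qy := Y2 / Y1 in q1 hz; set qz := Z2 / Z1 in q2 hz.
have hge : 0 <= Y1 * Z2 - Y2 * Z1.
  rewrite q1 q2.
  have : 0 <= (qz - qy) * (Y1 * Z1) by apply: Rmult_le_pos; nra.
  move=> h; nra.
have hne : Y1 * Z2 - Y2 * Z1 <> 0.
  move=> E; apply: H1; rewrite E; ring.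
have h0 : 0 < Y1 * Z2 - Y2 * Z1 by lra.
lra.
Qed.

End JoinProof.

Theorem proposition2p2 (T1 T2 : finType)
  (chi1 : T1 -> T1 -> T1 -> bool) (u1 : T1)
  (chi2 : T2 -> T2 -> T2 -> bool) (u2 : T2) :
  rooted_realizable chi1 u1 ->
  rooted_realizable chi2 u2 ->
  chirotope (@join_chi T1 T2 chi1 u1 chi2 u2) /\
  realizable (@join_chi T1 T2 chi1 u1 chi2 u2) /\
  extreme (@join_chi T1 T2 chi1 u1 chi2 u2) (@join_root T1 T2 u1 chi2 u2).
Proof.
move=> [[_ ext1] [p1 Hr1]] [[_ ext2] [p2 Hr2]].
have [np1 _] := rooted_nb Hr1 ext1.
have [_ ns2] := rooted_nb Hr2 ext2.
have [x0u Hx0p] := pred_spec np1.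
have [y0u Hy0s] := succ_spec ns2.
have [W1 [HW1 HW1u HW1x0 HW1p HW1n]] := normalize Hr1 x0u Hx0p.
have [W2 [HW2 HW2u HW2x0 HW2p HW2n]] := normalize2 Hr2 y0u Hy0s.
have [s [_ Hs0]] := large (X := (option (T1 + T2) * option (T1 + T2) * option (T1 + T2))%type)
  (fun t => Dr W1 W2 0 t.1.1 t.1.2 t.2) (fun t => Bd W1 W2 t.1.1 t.1.2 t.2).
have Hs : forall a b c, Bd W1 W2 a b c <> 0 -> Dr W1 W2 s a b c <> 0 /\
    (0 < Dr W1 W2 s a b c <-> 0 < Bd W1 W2 a b c).
  move=> a b c h; have := Hs0 (a, b, c) h; rewrite /= (Dr_lin W1 W2 s) -/(Bd W1 W2 a b c).
  done.
have R3 := join_realizable HW1 HW1u HW1x0 HW1p HW1n HW2 HW2u HW2x0 HW2p HW2n y0u Hs.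
have E3 := root_extreme HW1 HW1u HW1x0 HW1p HW1n HW2 HW2u HW2x0 HW2p HW2n x0u y0u Hs.
split; last by split.
by case: R3 => p Hp; exact: realizes_chirotope Hp.
Qed.
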